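(* Let $L$ be a proposal kernel on $\Omega$ and let $\alpha,\tilde\alpha:\Omega\times\Omega\to[0,1]$ be acceptance functions; let $K$, $\tilde K$ be the associated Metropolis-Hastings-type kernels, i.e. from $x$ propose $z\sim L(x,\cdot)$ and move to $z$ with probability $\alpha(x,z)$ (resp. $\tilde\alpha(x,z)$), otherwise stay at $x$. Let $V:\Omega\to[0,\infty)$ and assume a chain $\{Z_t\}$ driven by $K$ satisfies $\mathbb{E}[V(Z_{t+1})\mid Z_t]\le(1-a)V(Z_t)+b$ for constants $a,b$. Assume also that for some $\delta>0$ and some function $f:\Omega\times\Omega\to[0,\infty)$, $$\sup_{x\in\Omega}\|K(x,\cdot)-\tilde K(x,\cdot)\|_{\mathrm{TV}}\le\delta,\qquad |\alpha(x,y)-\tilde\alpha(x,y)|\le\delta f(x,y)\le\delta\ \text{ for all } x,y,$$ and $$\int_y f(x,y)V(y)\,L(x,dy)\le V(x)\quad\text{for all }x.$$ Then a chain $\{X_t\}$ evolving according to $\tilde K$ satisfies $$\mathbb{E}[V(X_{t+1})\mid X_t=x]\le(1-a+2\delta)V(x)+b.$$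
   Context: $\|\mu-\nu\|_{\mathrm{TV}}=\sup_A|\mu(A)-\nu(A)|$. *)

(* Defs.v *)
From HB Require Import structures.
From mathcomp Require Import all_boot all_order all_algebra.
From mathcomp Require Import all_classical all_reals all_analysis.
Set Implicit Arguments. Unset Strict Implicit. Unset Printing Implicit Defensive.
Import Order.TTheory GRing.Theory Num.Theory.
Local Open Scope classical_set_scope.
Local Open Scope ring_scope.
Local Open Scope ereal_scope.

(* MH_expect L alpha x g = \int g dK(x,.) =
     \int alpha(x,z) g(z) L(x,dz) + (1 - \int alpha(x,z) L(x,dz)) g(x). *)
Definition MH_expect d (T : measurableType d) (R : realType)
  (L : T -> probability T R) (alpha : T -> T -> R) (x : T) (g : T -> R)
  : \bar R :=
  \int[L x]_z (alpha x z * g z)%:E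
  + (1 - \int[L x]_z (alpha x z)%:E) * (g x)%:E.

Definition MH_kernel d (T : measurableType d) (R : realType)
  (L : T -> probability T R) (alpha : T -> T -> R) (x : T) (A : set T)
  : \bar R := MH_expect L alpha x (\1_A).

Definition MH_tv d (T : measurableType d) (R : realType)
  (L : T -> probability T R) (alpha alpha' : T -> T -> R) (x : T) : \bar R :=
  ereal_sup [set `|MH_kernel L alpha x A - MH_kernel L alpha' x A|
             | A in [set A | measurable A]].

(* Main.v *)
Require Import Defs.
From HB Require Import structures.
From mathcomp Require Import all_boot all_order all_algebra.
From mathcomp Require Import all_classical all_reals all_analysis.
From mathcomp Require Import measurable_realfun.
From mathcomp Require Import lra.
Import Order.TTheory GRing.Theory Num.Theory.
Local Open Scope classical_set_scope.
Local Open Scope ring_scope.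

Theorem mainTheorem5 (d : measure_display) (T : measurableType d)
  (R : realType) (L : T -> probability T R)
  (alpha alpha' : T -> T -> R) (V : T -> R) (f : T -> T -> R)
  (a b delta : R) :
  (forall x, measurable_fun setT (alpha x)) ->
  (forall x, measurable_fun setT (alpha' x)) ->
  (forall x y, 0 <= alpha x y <= 1) ->
  (forall x y, 0 <= alpha' x y <= 1) ->
  measurable_fun setT V ->
  (forall x, 0 <= V x) ->
  (forall x, measurable_fun setT (f x)) ->
  (forall x y, 0 <= f x y) ->
  (forall x, (MH_expect L alpha x V <= ((1 - a) * V x + b)%:E)%E) ->
  0 < delta ->
  (forall x, (MH_tv L alpha alpha' x <= delta%:E)%E) ->
  (forall x y, `|alpha x y - alpha' x y| <= delta * f x y <= delta) ->
  (forall x, (\int[L x]_y (f x y * V y)%:E <= (V x)%:E)%E) ->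
  forall x, (MH_expect L alpha' x V <= ((1 - a + 2 * delta) * V x + b)%:E)%E.
Proof.
move=> ma ma' ha ha' mV hV mf hf hK dpos _ hd hfV x.
set mu := L x.
have mEa : measurable_fun setT (fun z => (alpha x z)%:E : \bar R).
  by apply/measurable_EFinP.
have mEa' : measurable_fun setT (fun z => (alpha' x z)%:E : \bar R).
  by apply/measurable_EFinP.
have mEaV : measurable_fun setT (fun z => (alpha x z * V z)%:E : \bar R).
  by apply/measurable_EFinP; exact: measurable_funM.
have mEa'V : measurable_fun setT (fun z => (alpha' x z * V z)%:E : \bar R).
  by apply/measurable_EFinP; exact: measurable_funM.
have mEfV : measurable_fun setT (fun z => (f x z * V z)%:E : \bar R).
  by apply/measurable_EFinP; exact: measurable_funM.
have hax z : 0 <= alpha x z <= 1 := ha x z.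
have hax' z : 0 <= alpha' x z <= 1 := ha' x z.
have hdz z : `|alpha x z - alpha' x z| <= delta * f x z <= delta := hd x z.
set A := (\int[mu]_z (alpha x z * V z)%:E)%E.
set A' := (\int[mu]_z (alpha' x z * V z)%:E)%E.
set B := (\int[mu]_z (alpha x z)%:E)%E.
set B' := (\int[mu]_z (alpha' x z)%:E)%E.
have A0 : (0 <= A)%E.
  apply: integral_ge0 => z _; rewrite lee_fin.
  by case/andP: (hax z) => ? _; apply: mulr_ge0.
have A'0 : (0 <= A')%E.
  apply: integral_ge0 => z _; rewrite lee_fin.
  by case/andP: (hax' z) => ? _; apply: mulr_ge0.
have B0 : (0 <= B)%E.
  by apply: integral_ge0 => z _; rewrite lee_fin; case/andP: (hax z).
have B'0 : (0 <= B')%E.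
  by apply: integral_ge0 => z _; rewrite lee_fin; case/andP: (hax' z).
have int1 : (\int[mu]_z (cst 1%E z) = 1)%E.
  by rewrite integral_cst // mul1e; apply: probability_setT.
have B1 : (B <= 1)%E.
  rewrite -int1; apply: ge0_le_integral => //.
  - by move=> z _; rewrite lee_fin; case/andP: (hax z).
  - by move=> z _; rewrite /= lee_fin; case/andP: (hax z).
have B'1 : (B' <= 1)%E.
  rewrite -int1; apply: ge0_le_integral => //.
  - by move=> z _; rewrite lee_fin; case/andP: (hax' z).
  - by move=> z _; rewrite /= lee_fin; case/andP: (hax' z).
have hA' : (A' <= A + delta%:E * (V x)%:E)%E.
  apply: (@le_trans _ _ (\int[mu]_z ((alpha x z * V z)%:E
                        + delta%:E * (f x z * V z)%:E))%E).
    apply: ge0_le_integral => //.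
    - move=> z _; rewrite lee_fin.
      by case/andP: (hax' z) => ? _; apply: mulr_ge0.
    - apply: emeasurable_funD => //.
      by apply: emeasurable_funM => //; exact: measurable_cst.
    - move=> z _; rewrite -EFinM -EFinD lee_fin.
      have := hdz z => /andP[h1 _].
      have h2 : alpha' x z <= alpha x z + delta * f x z.
        have := ler_norm (alpha' x z - alpha x z).
        rewrite distrC; lra.
      have := hV z; nra.
  rewrite ge0_integralD //.
  - have fV0 : forall z, [set: T] z -> (0 <= (f x z * V z)%:E)%E.
      by move=> z _; rewrite lee_fin; apply: mulr_ge0.
    have d0 : (0 <= delta%:E)%E by rewrite lee_fin; apply: ltW.
    rewrite ge0_integralZl //.
    apply: leeD => //; apply: lee_wpmul2l => //.
    exact: hfV.
  - move=> z _; rewrite lee_fin.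
    by case/andP: (hax z) => ? _; apply: mulr_ge0.
  - move=> z _; rewrite -EFinM lee_fin; apply: mulr_ge0; first exact: ltW.
    exact: mulr_ge0.
  - by apply: emeasurable_funM => //; exact: measurable_cst.
have hB : (B <= B' + delta%:E)%E.
  have -> : (B' + delta%:E = \int[mu]_z ((alpha' x z)%:E + cst delta%:E z))%E.
    rewrite ge0_integralD //.
    - have hP : (mu [set: T] = 1)%E by apply: probability_setT.
      rewrite integral_cst // -[in LHS](mule1 delta%:E) -hP //.
    - by move=> z _; rewrite lee_fin; case/andP: (hax' z).
    - by move=> z _; rewrite /= lee_fin; apply: ltW.
  apply: ge0_le_integral => //.
  - by move=> z _; rewrite lee_fin; case/andP: (hax z).
  - apply: emeasurable_funD => //; exact: measurable_cst.
  - move=> z _; rewrite /= -EFinD lee_fin.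
    have := hdz z => /andP[h1 h3].
    have := ler_norm (alpha x z - alpha' x z); lra.
have Bfin : B \is a fin_num.
  by rewrite ge0_fin_numE // (le_lt_trans B1) // ltry.
have B'fin : B' \is a fin_num.
  by rewrite ge0_fin_numE // (le_lt_trans B'1) // ltry.
have hKx := hK x.
rewrite /MH_expect -/mu -/A -/B in hKx.
rewrite /MH_expect -/mu -/A' -/B'.
rewrite -(fineK Bfin) -(fineK B'fin) in hKx hB B1 B'1 *.
rewrite -EFinB -EFinM in hKx *.
have Afin : A \is a fin_num.
  rewrite ge0_fin_numE //.
  have : (A <= ((1 - a) * V x + b)%:E - ((1 - fine B) * V x)%:E)%E.
    by rewrite leeBrDr.
  by move/le_lt_trans; apply; rewrite -EFinB ltry.
have A'fin : A' \is a fin_num.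
  by rewrite ge0_fin_numE // (le_lt_trans hA') // -(fineK Afin) -EFinM -EFinD ltry.
rewrite -(fineK Afin) in hKx hA'.
rewrite -(fineK A'fin) in hA' *.
rewrite -EFinM -EFinD in hA'.
rewrite -EFinD in hB.
have hB2 : fine B <= fine B' + delta by move: hB; rewrite lee_fin.
have hA2 : fine A' <= fine A + delta * V x by move: hA'; rewrite lee_fin.
rewrite -EFinB -EFinM -EFinD lee_fin.
have hV0 := hV x.
have hp : 0 <= (fine B' + delta - fine B) * V x.
  apply: mulr_ge0 => //; lra.
have hK2 : fine A + (1 - fine B) * V x <= (1 - a) * V x + b.
  by move: hKx; rewrite -EFinD lee_fin.
lra.
Qed.
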